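(* Let $V$ be a vertex operator algebra of CFT-type that satisfies the $C_2$-cofiniteness condition. Let $M$ be a subspace of $V$ with $C_2(V)\subseteq M$ and $\mathbf{1}\notin M$. Then $M$ is an $MZ_{0,-1}$-subspace of $V$ and $r_{0,-1}(M)=\bigoplus_{n=1}^{\infty}V_n$.
   Context: A vertex operator algebra is a $\mathbb{Z}$-graded vertex algebra $V=\bigoplus_{n\in\mathbb{Z}}V_n$ over $\mathbb{C}$ (with $Y(u,z)=\sum_n u_nz^{-n-1}$, $\mathbf{1}\in V_0$, and $u_mV_n\subseteq V_{k+n-m-1}$ for $u\in V_k$), with $\dim V_n<\infty$, $V_n=0$ for $n$ sufficiently negative, and a conformal vector $\omega\in V_2$ whose modes $L(n)$ satisfy the Virasoro relations, $L(0)|_{V_n}=n$, and $Y(L(-1)v,z)=\frac{d}{dz}Y(v,z)$. $V$ is of CFT-type if $V=\bigoplus_{n\ge0}V_n$ and $V_0=\mathbb{C}\mathbf{1}$. $C_2(V)=\operatorname{span}_{\mathbb{C}}\{u_{-2}v:u,v\in V\}$; $V$ satisfies the $C_2$-cofiniteness condition if $\dim V/C_2(V)<\infty$. Iterated products are nested to the right: $v_{n_1}\cdots v_{n_t}v=v_{n_1}(\cdots(v_{n_t}v))$. For a subspace $M\subseteq V$: $r_{0,-1}(M)$ is the set of $v\in V$ for which there is $m\ge 0$ with $v_{n_1}\cdots v_{n_t}v\in M$ for all $t\ge m$ and all $n_1,\dots,n_t\in\{0,-1\}$. $lsr_{0,-1}(M)$ is the set of $v\in V$ such that for every $b\in V$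 there is $m\ge0$ with $b_sv_{n_1}\cdots v_{n_t}v\in M$ for all $t\ge m$ and all $s,n_1,\dots,n_t\in\{0,-1\}$. $rsr_{0,-1}(M)$ is the set of $v\in V$ such that for every $w\in V$ there is $m\ge 0$ with $(v_{n_1}\cdots v_{n_t}v)_nw\in M$ for all $t\ge m$ and all $n,n_1,\dots,n_t\in\{0,-1\}$. $sr_{0,-1}(M)=lsr_{0,-1}(M)\cap rsr_{0,-1}(M)$. $M$ is an $MZ_{0,-1}$-subspace of $V$ if $r_{0,-1}(M)=sr_{0,-1}(M)$. *)

(* Defs.v *)
(* The ground field C is the complex numbers R[i] for an
   arbitrary R : realType (a realType is, up to isomorphism, the field of
   real numbers, so R[i] is C). *)
From mathcomp Require Import all_boot all_algebra complex.
From mathcomp Require Import reals.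
Set Implicit Arguments.
Unset Strict Implicit.
Unset Printing Implicit Defensive.
Import GRing.Theory.
Local Open Scope ring_scope.

Section VOA.
Variable R : realType.
Local Notation C := (R[i]).
Variable V : lmodType C.

(* Y u n v  stands for the mode  u_n v  (Y(u,z) = sum_n u_n z^{-n-1}). *)
Variable Y : V -> int -> V -> V.
(* pi n is the projection of V = (+)_n V_n onto V_n. *)
Variable pi : int -> V -> V.

Definition homog (n : int) (v : V) : Prop := pi n v = v.

Definition gbinom (p : int) (i : nat) : C :=
  (\prod_(j < i) ((p - (j : nat)%:Z)%:~R : C)) / (i`!)%:R.

Definition in_span (s : seq V) (v : V) : Prop :=
  exists cs : seq C, v = \sum_(i < size s) cs`_i *: s`_i.

Record is_VOA (one omega : V) : Prop := {
  pi_linear : forall n (a : C) (u v : V), pi n (a *: u + v) = a *: pi n u + pi n v;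
  pi_orth : forall m n v, pi m (pi n v) = if m == n then pi n v else 0;
  pi_sum : forall v, exists s : seq int,
      uniq s /\ v = \sum_(n <- s) pi n v /\ (forall n, n \notin s -> pi n v = 0);
  dim_finite : forall n, exists s : seq V,
      (forall x, x \in s -> homog n x) /\ forall v, homog n v -> in_span s v;
  bounded_below : exists N : int, forall n v, n < N -> pi n v = 0;
  Y_linear_r : forall u n (a : C) (v w : V), Y u n (a *: v + w) = a *: Y u n v + Y u n w;
  Y_linear_l : forall n v (a : C) (u u' : V), Y (a *: u + u') n v = a *: Y u n v + Y u' n v;
  truncation : forall u v, exists N : int, forall n, N <= n -> Y u n v = 0;
  vacuum_id : forall n v, Y one n v = if n == -1 then v else 0;
  creation_m1 : forall u, Y u (-1) one = u;
  creation_pos : forall u n, 0 <= n -> Y u n one = 0;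
  borcherds : forall u v w (p q r : int), exists N : nat, forall M : nat, (N <= M)%N ->
      \sum_(i < M) gbinom p i *: Y (Y u (r + i%:Z) v) (p + q - i%:Z) w =
      \sum_(i < M) ((-1) ^+ i * gbinom r i) *:
          (Y u (p + r - i%:Z) (Y v (q + i%:Z) w)
           - (-1 : C) ^ r *: Y v (q + r - i%:Z) (Y u (p + i%:Z) w));
  vacuum_deg : homog 0 one;
  mode_deg : forall k n m u v, homog k u -> homog n v ->
      homog (k + n - m - 1) (Y u m v);
  (* conformal vector, L(n) = omega_{n+1} *)
  omega_deg : homog 2 omega;
  virasoro : exists c : C, forall (m n : int) (w : V),
      Y omega (m + 1) (Y omega (n + 1) w) - Y omega (n + 1) (Y omega (m + 1) w) =
      (m - n)%:~R *: Y omega (m + n + 1) w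
      + (if m + n == 0 then ((m ^+ 3 - m)%:~R / 12%:R) * c else 0) *: w;
  L0_grading : forall n v, homog n v -> Y omega 1 v = n%:~R *: v;
  L_m1_derivative : forall v n w, Y (Y omega 0 v) n w = - (n%:~R) *: Y v (n - 1) w
}.

Definition CFT_type (one : V) : Prop :=
  (forall n v, n < 0 -> pi n v = 0) /\
  (forall v, homog 0 v -> exists a : C, v = a *: one).

Definition C2 (x : V) : Prop :=
  exists l : seq (C * V * V), x = \sum_(t <- l) t.1.1 *: Y t.1.2 (-2) t.2.

Definition C2_cofinite : Prop :=
  exists s : seq V, forall v, exists cs : seq C,
    C2 (v - \sum_(i < size s) cs`_i *: s`_i).

Definition subspace (M : V -> Prop) : Prop :=
  M 0 /\ forall (a : C) u v, M u -> M v -> M (a *: u + v).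

(* iterated product  v_{n_1} ... v_{n_t} v  (nested to the right) *)
Definition iter_prod (v : V) (ns : seq int) : V := foldr (fun n x => Y v n x) v ns.

Definition idx01 (ns : seq int) : bool := all (fun n => (n == 0) || (n == -1)) ns.
Definition in01 (n : int) : bool := (n == 0) || (n == -1).

Definition r01 (M : V -> Prop) (v : V) : Prop :=
  exists m : nat, forall ns : seq int, (m <= size ns)%N -> idx01 ns -> M (iter_prod v ns).

Definition lsr01 (M : V -> Prop) (v : V) : Prop :=
  forall b : V, exists m : nat, forall (s : int) (ns : seq int),
    (m <= size ns)%N -> in01 s -> idx01 ns -> M (Y b s (iter_prod v ns)).

Definition rsr01 (M : V -> Prop) (v : V) : Prop :=
  forall w : V, exists m : nat, forall (n : int) (ns : seq int),
    (m <= size ns)%N -> in01 n -> idx01 ns -> M (Y (iter_prod v ns) n w).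

Definition sr01 (M : V -> Prop) (v : V) : Prop := lsr01 M v /\ rsr01 M v.

Definition MZ01_subspace (M : V -> Prop) : Prop := forall v, r01 M v <-> sr01 M v.

Definition in_positive_part (v : V) : Prop := forall n : int, n <= 0 -> pi n v = 0.

End VOA.

(* Main.v *)
Require Import Defs.
From mathcomp Require Import all_boot all_order all_algebra complex.
From mathcomp Require Import reals.
From mathcomp Require Import zify.
Import GRing.Theory Num.Theory Order.TTheory.
Local Open Scope ring_scope.

Section Proofs.
Variable R : realType.
Local Notation C := (R[i]).
Variable V : lmodType C.
Variables (Y : V -> int -> V -> V) (pi : int -> V -> V) (one omega : V).
Hypothesis HV : is_VOA Y pi one omega.
Hypothesis Hcft : CFT_type pi one.

Lemma YDr u n v w : Y u n (v + w) = Y u n v + Y u n w.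
Proof. by have := Y_linear_r HV u n 1 v w; rewrite !scale1r. Qed.
Lemma Y0r u n : Y u n 0 = 0.
Proof. have h := YDr u n 0 0; rewrite addr0 in h. by apply: (addrI (Y u n 0)); rewrite addr0 -h. Qed.
Lemma YZr u n a v : Y u n (a *: v) = a *: Y u n v.
Proof. by have := Y_linear_r HV u n a v 0; rewrite !addr0 Y0r addr0. Qed.
Lemma YNr u n v : Y u n (- v) = - Y u n v.
Proof. by rewrite -scaleN1r YZr scaleN1r. Qed.
Lemma YBr u n v w : Y u n (v - w) = Y u n v - Y u n w.
Proof. by rewrite YDr YNr. Qed.
Lemma YDl u u' n v : Y (u + u') n v = Y u n v + Y u' n v.
Proof. by have := Y_linear_l HV n v 1 u u'; rewrite !scale1r. Qed.
Lemma Y0l u n : Y 0 n u = 0.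
Proof. have h := YDl 0 0 n u; rewrite addr0 in h. by apply: (addrI (Y 0 n u)); rewrite addr0 -h. Qed.
Lemma YZl u n a v : Y (a *: u) n v = a *: Y u n v.
Proof. by have := Y_linear_l HV n v a u 0; rewrite !addr0 Y0l addr0. Qed.
Lemma Y_sumr (I : Type) (s : seq I) (F : I -> V) u n :
  Y u n (\sum_(i <- s) F i) = \sum_(i <- s) Y u n (F i).
Proof.
elim: s => [|x s IH]; first by rewrite !big_nil Y0r.
by rewrite !big_cons YDr IH.
Qed.
Lemma Y_suml (I : Type) (s : seq I) (F : I -> V) w n :
  Y (\sum_(i <- s) F i) n w = \sum_(i <- s) Y (F i) n w.
Proof.
elim: s => [|x s IH]; first by rewrite !big_nil Y0l.
by rewrite !big_cons YDl IH.
Qed.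

Lemma piD n u v : pi n (u + v) = pi n u + pi n v.
Proof. by have := pi_linear HV n 1 u v; rewrite !scale1r. Qed.
Lemma pi0 n : pi n 0 = 0.
Proof. have h := piD n 0 0; rewrite addr0 in h. by apply: (addrI (pi n 0)); rewrite addr0 -h. Qed.
Lemma piZ n a v : pi n (a *: v) = a *: pi n v.
Proof. by have := pi_linear HV n a v 0; rewrite !addr0 pi0 addr0. Qed.
Lemma piN n v : pi n (- v) = - pi n v.
Proof. by rewrite -scaleN1r piZ scaleN1r. Qed.
Lemma piB n v w : pi n (v - w) = pi n v - pi n w.
Proof. by rewrite piD piN. Qed.
Lemma pi_sumE (I : Type) (s : seq I) (F : I -> V) n :
  pi n (\sum_(i <- s) F i) = \sum_(i <- s) pi n (F i).
Proof.
elim: s => [|x s IH]; first by rewrite !big_nil pi0.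
by rewrite !big_cons piD IH.
Qed.
Lemma homog_pi n x m : homog pi n x -> pi m x = if m == n then x else 0.
Proof. by rewrite /homog => h; rewrite -{1}h (pi_orth HV); case: eqP. Qed.
Lemma pi_homog n x : homog pi n (pi n x).
Proof. by rewrite /homog (pi_orth HV) eqxx. Qed.

Lemma C2_0 : C2 Y 0.
Proof. by exists [::]; rewrite big_nil. Qed.
Lemma C2_D x y : C2 Y x -> C2 Y y -> C2 Y (x + y).
Proof. by move=> [l1 ->] [l2 ->]; exists (l1 ++ l2); rewrite big_cat. Qed.
Lemma C2_Z a x : C2 Y x -> C2 Y (a *: x).
Proof.
move=> [l ->]; exists [seq ((a * t.1.1, t.1.2), t.2) | t <- l].
rewrite big_map scaler_sumr; apply: eq_bigr => t _ /=; by rewrite scalerA.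
Qed.
Lemma C2_N x : C2 Y x -> C2 Y (- x).
Proof. by move=> h; rewrite -scaleN1r; apply: C2_Z. Qed.
Lemma C2_B x y : C2 Y x -> C2 Y y -> C2 Y (x - y).
Proof. by move=> h1 h2; apply: C2_D => //; apply: C2_N. Qed.
Lemma C2_sum (I : Type) (s : seq I) (F : I -> V) :
  (forall i, C2 Y (F i)) -> C2 Y (\sum_(i <- s) F i).
Proof.
move=> h; elim: s => [|x s IH]; first by rewrite big_nil; apply: C2_0.
by rewrite big_cons; apply: C2_D.
Qed.
Lemma C2_Y a b : C2 Y (Y a (-2) b).
Proof. by exists [:: (1, a, b)]; rewrite big_seq1 scale1r. Qed.


Lemma C2_neg (k : nat) u w : C2 Y (Y u (- (k.+2)%:Z) w).
Proof.
elim: k u => [|k IH] u; first exact: C2_Y.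
have e : (- (k.+3)%:Z) = - (k.+2)%:Z - 1 by lia.
have h := L_m1_derivative HV u (- (k.+2)%:Z) w.
have -> : Y u (- (k.+3)%:Z) w = ((k.+2)%:R)^-1 *: Y (Y omega 0 u) (- (k.+2)%:Z) w.
  rewrite h scalerA e -[LHS]scale1r; congr (_ *: _).
  rewrite mulrNz opprK pmulrn mulVf //.
  by rewrite pnatr_eq0.
by apply: C2_Z; apply: IH.
Qed.

Lemma C2_negz (k : int) u w : k <= -2 -> C2 Y (Y u k w).
Proof.
move=> hk; have [n ->] : exists n : nat, k = - (n.+2)%:Z.
  by exists (`|k|%N - 2)%N; lia.
exact: C2_neg.
Qed.

Lemma gbinom_0 p : gbinom R p 0 = 1.
Proof. by rewrite /gbinom big_ord0 divr1. Qed.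
Lemma gbinom0S i : gbinom R 0 i.+1 = 0.
Proof. by rewrite /gbinom big_ord_recl /= subr0 mul0r mul0r. Qed.


Lemma key_left b a c s : s <= 0 -> C2 Y (Y b s (Y a (-2) c)).
Proof.
move=> hs.
have [N HN] := borcherds HV b a c s (-2) 0.
have E := HN N.+1 (leqnSn N).
have E2 : Y b s (Y a (-2) c) = \sum_(i < N.+1) gbinom R s i *:
    Y (Y b (0 + i%:Z) a) (s + -2 - i%:Z) c + Y a (-2) (Y b s c).
  rewrite E big_ord_recl big1 => [|i _]; last by rewrite lift0 gbinom0S mulr0 scale0r.
  rewrite /= expr0 gbinom_0 mulr1 scale1r addr0 expr0z scale1r.
  by rewrite !addr0 subrK.
rewrite E2; apply: C2_D; last exact: C2_Y.
apply: C2_sum => i; apply: C2_Z; apply: C2_negz; lia.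
Qed.

Lemma C2_left b s x : s <= 0 -> C2 Y x -> C2 Y (Y b s x).
Proof.
move=> hs [l ->]; rewrite Y_sumr; apply: C2_sum => t.
by rewrite YZr; apply: C2_Z; apply: key_left.
Qed.


Lemma sum_recl0 N (F : 'I_N.+1 -> V) :
  (forall i : 'I_N, F (lift ord0 i) = 0) -> \sum_(i < N.+1) F i = F ord0.
Proof. by move=> h; rewrite big_ord_recl big1 ?addr0. Qed.

Lemma key_right a c n w : n <= 0 -> C2 Y (Y (Y a (-2) c) n w).
Proof.
move=> hn.
have [N HN] := borcherds HV a c w 0 n (-2).
have E := HN N.+1 (leqnSn N).
rewrite sum_recl0 /= in E; last first.
  by move=> i; rewrite /bump /= add1n gbinom0S scale0r.
rewrite gbinom_0 scale1r add0r in E.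
rewrite -[n]subr0 -[-2]addr0 E.
apply: C2_sum => i; apply: C2_Z; apply: C2_B.
  by apply: C2_negz; lia.
by apply: C2_Z; apply: C2_negz; lia.
Qed.

Lemma C2_right x n w : n <= 0 -> C2 Y x -> C2 Y (Y x n w).
Proof.
move=> hn [l ->]; rewrite Y_suml; apply: C2_sum => t.
by rewrite YZl; apply: C2_Z; apply: key_right.
Qed.

Lemma two_neq0 : (2%:R : C) != 0.
Proof. by rewrite pnatr_eq0. Qed.

Lemma skew0 v : C2 Y (Y v 0 v).
Proof.
have [N HN] := borcherds HV v v one (-1) 0 0.
have E := HN N.+1 (leqnSn N).
rewrite [in RHS]sum_recl0 /= in E; last first.
  by move=> i; rewrite /bump /= add1n gbinom0S mulr0 scale0r.
rewrite big_ord_recl /= in E.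
rewrite !gbinom_0 expr0 mulr1 !scale1r in E.
rewrite ?addr0 ?add0r ?subr0 in E.
rewrite (creation_m1 HV) (creation_pos HV) // Y0r (creation_m1 HV) add0r in E.
set S := \sum_(i < N) _ in E.
have hS : C2 Y S.
  apply: C2_sum => i; apply: C2_Z; apply: C2_negz; rewrite /bump /=; lia.
set x := Y v 0 v in E *.
have h2 : x + x = - S.
  apply/eqP; rewrite -addr_eq0 -addrA E addrN //.
rewrite -[x]scale1r -(mulVf two_neq0) -scalerA scaler_nat.
by apply: C2_Z; rewrite mulr2n h2; apply: C2_N.
Qed.

Lemma deriv0 v a b :
  Y v 0 (Y a (-1) b) = Y (Y v 0 a) (-1) b + Y a (-1) (Y v 0 b).
Proof.
have [N HN] := borcherds HV v a b 0 (-1) 0.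
have E := HN N.+1 (leqnSn N).
rewrite [in RHS]sum_recl0 /= in E; last first.
  by move=> i; rewrite /bump /= add1n gbinom0S mulr0 scale0r.
rewrite sum_recl0 /= in E; last first.
  by move=> i; rewrite /bump /= add1n gbinom0S scale0r.
rewrite !gbinom_0 expr0 mulr1 !scale1r in E.
rewrite ?addr0 ?add0r ?subr0 in E.
by rewrite E subrK.
Qed.


Definition Q (d : int) (x : V) := forall n, n <= d -> pi n x = 0.

Lemma Q_weak d d' x : Q d x -> d' <= d -> Q d' x.
Proof. move=> h hd n hn; apply: h; lia. Qed.

Lemma decomp x : exists s : seq int,
  x = \sum_(n <- s) pi n x /\ forall n, n \notin s -> pi n x = 0.
Proof. by have [s [_ [E h]]] := pi_sum HV x; exists s. Qed.

Lemma Q_mul d u x : Q 0 u -> Q d x -> Q (d + 1) (Y u (-1) x).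
Proof.
move=> hu hx n hn.
have [sa [Ea _]] := decomp u; have [sb [Eb _]] := decomp x.
rewrite Ea Y_suml pi_sumE; apply: big1 => k _.
rewrite Eb Y_sumr pi_sumE; apply: big1 => l _.
rewrite (homog_pi _ _ n (mode_deg HV (-1) (pi_homog k u) (pi_homog l x))).
case: eqP => // e.
have [hk|hk] := boolP (k <= 0); first by rewrite hu // Y0l.
have [hl|hl] := boolP (l <= d); first by rewrite hx // Y0r.
lia.
Qed.

Lemma Q_all x : Q (-1) x.
Proof. move=> n hn; apply: (proj1 Hcft); lia. Qed.

Lemma key_pi n a b : C2 Y (pi n (Y a (-2) b)).
Proof.
have [sa [Ea _]] := decomp a; have [sb [Eb _]] := decomp b.
rewrite Ea Y_suml pi_sumE; apply: C2_sum => k.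
rewrite Eb Y_sumr pi_sumE; apply: C2_sum => l.
rewrite (homog_pi _ _ n (mode_deg HV (-2) (pi_homog k a) (pi_homog l b))).
case: eqP => _; [exact: C2_Y | exact: C2_0].
Qed.

Lemma C2_pi n x : C2 Y x -> C2 Y (pi n x).
Proof.
move=> [l ->]; rewrite pi_sumE; apply: C2_sum => t.
by rewrite piZ; apply: C2_Z; apply: key_pi.
Qed.

Lemma int_bound (s : seq int) : exists N : int, forall n, N <= n -> n \notin s.
Proof.
elim: s => [|k s [N h]]; first by exists 0.
exists (Order.max N (k + 1)) => n hn; rewrite in_cons negb_or; apply/andP; split.
  by apply/eqP => e; lia.
by apply: h; lia.
Qed.

Lemma bound_seq (s : seq V) : exists N : int,
  forall y, y \in s -> forall n, N <= n -> pi n y = 0.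
Proof.
elim: s => [|y s [N h]]; first by exists 0.
have [sy [_ hy]] := decomp y; have [Ny hNy] := int_bound sy.
exists (Order.max N Ny) => z; rewrite in_cons => /orP [/eqP -> | hz] n hn.
  by apply: hy; apply: hNy; lia.
by apply: h => //; lia.
Qed.

Hypothesis HC2 : C2_cofinite Y.

Lemma C2_high : exists N : int, forall n x, N <= n -> homog pi n x -> C2 Y x.
Proof.
have [s hs] := HC2; have [N hN] := bound_seq s.
exists N => n x hn hx; have [cs hc] := hs x.
set c := x - _ in hc.
have -> : x = pi n c.
  rewrite /c piB pi_sumE big1 ?subr0 ?hx // => i _.
  by rewrite piZ (hN _ (mem_nth 0 (ltn_ord i))) ?scaler0.
exact: C2_pi.
Qed.

Lemma C2_Q : exists D : int, forall d x, D <= d -> Q d x -> C2 Y x.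
Proof.
have [N hN] := C2_high; exists N => d x hd hq.
have [s [E _]] := decomp x; rewrite E; apply: C2_sum => n.
have [h|h] := boolP (n <= d); first by rewrite hq //; exact: C2_0.
by apply: (hN n) => //; [lia | exact: pi_homog].
Qed.

Lemma iter_nseq v t : iter_prod Y v (nseq t (-1)) = iter t (Y v (-1)) v.
Proof. by elim: t => //= t <-. Qed.

Lemma Q_iter v t : Q 0 v -> Q t%:Z (iter t (Y v (-1)) v).
Proof.
move=> hv; elim: t => [//|t IH] /=.
by apply: (Q_weak _ _ _ (Q_mul _ _ _ hv IH)); lia.
Qed.

Lemma Q_iterL u y j : Q 0 u -> Q (-1 + j%:Z) (iter j (Y u (-1)) y).
Proof.
move=> hu; elim: j => [|j IH] /=; first by apply: (Q_weak _ _ _ (Q_all y)); lia.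
by apply: (Q_weak _ _ _ (Q_mul _ _ _ hu IH)); lia.
Qed.

Lemma C2_v0_iter v t : C2 Y (Y v 0 (iter t (Y v (-1)) v)).
Proof.
elim: t => [|t IH] /=; first exact: skew0.
rewrite deriv0; apply: C2_D; first by apply: C2_right => //; exact: skew0.
by apply: C2_left.
Qed.

Lemma iter_cases v ns : idx01 ns ->
  C2 Y (iter_prod Y v ns) \/ iter_prod Y v ns = iter (size ns) (Y v (-1)) v.
Proof.
elim: ns => [|n ns IH]; first by right.
move=> /andP [hn hns].
have -> : iter_prod Y v (n :: ns) = Y v n (iter_prod Y v ns) by [].
case: (IH hns) => [h|->].
  by left; apply: C2_left => //; case/orP: hn => /eqP ->.
case/orP: hn => /eqP ->; [left; exact: C2_v0_iter | by right].
Qed.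

Lemma forward v : Q 0 v -> exists m : nat, forall ns,
  (m <= size ns)%N -> idx01 ns -> C2 Y (iter_prod Y v ns).
Proof.
move=> hv; have [D hD] := C2_Q; exists `|D|%N => ns hs h01.
case: (iter_cases v ns h01) => [//|->].
by apply: (hD (size ns)%:Z); [lia | exact: Q_iter].
Qed.


Lemma converse (M : V -> Prop) : subspace M -> (forall x, C2 Y x -> M x) ->
  ~ M one -> forall v, r01 Y M v -> Q 0 v.
Proof.
move=> [HM0 HM] HC2M H1 v [m hm] n hn.
have [hneg|hnn] := boolP (n < 0); first exact: (proj1 Hcft).
have -> : n = 0 by lia.
have [a Ea] := proj2 Hcft _ (pi_homog 0 v).
rewrite Ea; have [->|a0] := eqVneq a 0; first by rewrite scale0r.
exfalso.
set u := v - a *: one.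
have Qu : Q 0 u.
  move=> k hk; rewrite /u piB piZ.
  have [hk'|hk'] := boolP (k < 0); first by rewrite !(proj1 Hcft k) // scaler0 subrr.
  have -> : k = 0 by lia.
  by rewrite Ea (vacuum_deg HV) subrr.
set L := Y u (-1); set T := Y v (-1).
have hT : forall y, T y = L y + a *: y.
  move=> y; rewrite /T /L -{1}(subrK (a *: one) v) -/u YDl YZl (vacuum_id HV) eqxx //.
have iterL : forall j c x y, iter j L (c *: x + y) = c *: iter j L x + iter j L y.
  by elim=> [//|j IH] c x y /=; rewrite IH /L (Y_linear_r HV).
have MZ : forall c x, M x -> M (c *: x).
  by move=> c x hx; rewrite -[_ *: _]addr0; apply: HM.
have MD : forall x y, M x -> M y -> M (x + y).
  by move=> x y hx hy; rewrite -[x]scale1r; apply: HM.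
have [D hD] := C2_Q.
have Lhigh : forall j y, (`|D| + 1 <= j)%N -> M (iter j L y).
  move=> j y hj; apply: (HC2M); apply: (hD (-1 + j%:Z)); first by lia.
  exact: Q_iterL.
have hM : forall s, (m.+1 <= s)%N -> M (iter s T one).
  move=> s hs; have := hm (nseq s.-1 (-1)).
  rewrite size_nseq iter_nseq -/T => /(_ _ _).
  have e : iter s.-1 T v = iter s T one.
    by rewrite -{1}(creation_m1 HV v) -/T -iterSr prednK //; lia.
  rewrite e; apply; first by lia.
  by rewrite /idx01 all_nseq orbT.
have Up : forall j s, (m.+1 <= s)%N -> M (iter j L (iter s T one)).
  elim=> [|j IH] s hs; first exact: hM.
  rewrite iterSr.
  have -> : L (iter s T one) = (- a) *: iter s T one + iter s.+1 T one.
    by rewrite [in RHS]iterS hT addrC scaleNr addrK.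
  rewrite iterL; apply: (MD); first by apply: (MZ); apply: IH.
  by apply: IH; lia.
have Down : forall s, (forall j, M (iter j L (iter s.+1 T one))) ->
    forall j, M (iter j L (iter s T one)).
  move=> s hs.
  suff: forall k j, (`|D| + 1 <= j + k)%N -> M (iter j L (iter s T one)).
    by move=> h j; apply: (h (`|D| + 1)%N); lia.
  elim=> [|k IH] j hj; first by apply: (Lhigh); lia.
  have e : iter j L (iter s.+1 T one) =
      a *: iter j L (iter s T one) + iter j.+1 L (iter s T one).
    by rewrite iterS hT addrC iterL -iterSr.
  have -> : iter j L (iter s T one) =
      a^-1 *: (iter j L (iter s.+1 T one) + (-1) *: iter j.+1 L (iter s T one)).
    by rewrite e scaleN1r addrK scalerA mulVf // scale1r.
  apply: (MZ); apply: (MD); first exact: hs.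
  by apply: (MZ); apply: IH; lia.
have All : forall k, (k <= m.+1)%N -> forall j, M (iter j L (iter (m.+1 - k) T one)).
  elim=> [|k IH] hk j; first by rewrite subn0; apply: Up.
  apply: Down => j'.
  have e : (m.+1 - k = (m.+1 - k.+1).+1)%N by lia.
  by rewrite -e; apply: IH; apply: ltnW.
have := All m.+1 (leqnn _) 0.
by rewrite subnn.
Qed.


Lemma main_sec (M : V -> Prop) : subspace M -> (forall x, C2 Y x -> M x) ->
  ~ M one ->
  MZ01_subspace Y M /\ (forall v, r01 Y M v <-> in_positive_part pi v).
Proof.
move=> HM HC2M H1; split.
  move=> v; split.
    move=> hr; have [m hm] := forward v (converse M HM HC2M H1 v hr).
    split.
      move=> b; exists m => s ns hs h1 h2; apply: (HC2M); apply: C2_left.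
        by case/orP: h1 => /eqP ->.
      exact: hm.
    move=> w; exists m => n ns hs h1 h2; apply: (HC2M); apply: C2_right.
      by case/orP: h1 => /eqP ->.
    exact: hm.
  move=> [hl _]; have [m hm] := hl one; exists m => ns hs h.
  have := hm (-1) ns hs (eqxx _ : in01 (-1)) h.
  by rewrite (vacuum_id HV) eqxx.
move=> v; split; first exact: converse.
move=> hv; have [m hm] := forward v hv; exists m => ns hs h.
by apply: (HC2M); apply: hm.
Qed.

End Proofs.

Theorem mainTheorem13 (R : realType) (V : lmodType R[i])
    (Y : V -> int -> V -> V) (pi : int -> V -> V) (one omega : V)
    (HV : is_VOA Y pi one omega)
    (Hcft : CFT_type pi one)
    (HC2 : C2_cofinite Y)
    (M : V -> Prop) (HM : subspace M)
    (HC2M : forall x, C2 Y x -> M x)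
    (H1 : ~ M one) :
  MZ01_subspace Y M /\ (forall v, r01 Y M v <-> in_positive_part pi v).
Proof. exact: (main_sec _ _ _ _ _ _ HV Hcft HC2 _ HM HC2M H1). Qed.
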